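(* For each $j$ (indices mod $8g-4$), with $\ell$ denoting arc length on the unit circle: (i) there exist $a_j,b_j\in(P_j,Q_j)$ with $\ell(P_j,a_j)>\frac12\ell(P_j,Q_j)$ and $\ell(b_j,Q_j)>\frac12\ell(P_j,Q_j)$ such that $T_j(a_j)=P_{\rho(j)+1}$ and $T_{j-1}(b_j)=Q_{\theta(j-1)}$; (ii) for every $x\in[P_j,Q_j]$ with $\ell(P_j,x)\le\frac12\ell(P_j,Q_j)$, $T_j(x)\in[Q_{\sigma(j)+1},P_{\sigma(j)+2}]$; (iii) for every $x\in[P_j,Q_j]$ with $\ell(x,Q_j)\le\frac12\ell(P_j,Q_j)$, $T_{j-1}(x)\in[Q_{\theta(j-1)},P_{\theta(j-1)+1}]$.
   Context: Setting. Fix $g\ge 2$; indices are mod $8g-4$. Let $\mathcal F$ be the regular hyperbolic $(8g-4)$-gon in the unit disk centered at $0$ with all interior angles $\pi/2$, sides labeled $1,\dots,8g-4$ counterclockwise, side $i$ joining vertices $V_i$ and $V_{i+1}$. The complete geodesic extending side $i$ goes from $P_i$ (beyond $V_i$) to $Q_{i+1}$ (beyond $V_{i+1}$) on the unit circle; counterclockwise order $P_1,Q_1,P_2,Q_2,\dots,P_{8g-4},Q_{8g-4}$. $\sigma(i)=4g-i$ ($i$ odd), $\sigma(i)=2-i$ ($i$ even), $\rho(i)=\sigma(i)+1$, $\theta(i)=\sigma(i)-1$. $T_i$ is the Möbius transformation mapping side $i$ onto side $\sigma(i)$, with isometric circle the geodesic $P_iQ_{i+1}$, mapped onto the geodesic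 $Q_{\sigma(i)+1}P_{\sigma(i)}$, inside to outside. Arcs $[A,B]$, $(A,B)$ are counterclockwise from $A$ to $B$, and $\ell(A,B)$ is the arc length of $[A,B]$. *)

(* Defs.v *)
From Stdlib Require Import Reals ZArith Lra.
From Coquelicot Require Import Coquelicot.
Open Scope R_scope.

Definition Nsides (g : nat) : R := INR (8 * g - 4).

(** Side-pairing index maps on (representatives in Z of) indices mod 8g-4. *)
Definition sgm (g : nat) (i : Z) : Z :=
  if Z.odd i then (4 * Z.of_nat g - i)%Z else (2 - i)%Z.
Definition rh (g : nat) (i : Z) : Z := (sgm g i + 1)%Z.
Definition tht (g : nat) (i : Z) : Z := (sgm g i - 1)%Z.

Definition cis (t : R) : C := (cos t, sin t).

(** Placement of F: vertex V_k is in direction 2 pi (k-1)/N, so side i (joining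
    V_i and V_{i+1}) has its midpoint in direction phi_i = pi (2i-1)/N. *)
Definition phi (g : nat) (i : Z) : R := PI * (2 * IZR i - 1) / Nsides g.

(** The complete geodesic extending side i is the circle orthogonal to the unit
    circle with Euclidean center dist * e^{i phi_i} and radius rad, where
    dist^2 = 1 + rad^2; interior angles pi/2 (adjacent such circles orthogonal)
    force dist^2 * cos(2 pi / N) = 1.  Its endpoints are e^{i (phi_i -+ beta)}
    with cos beta = 1/dist. *)
Definition dist (g : nat) : R := / sqrt (cos (2 * PI / Nsides g)).
Definition rad (g : nat) : R := sqrt (dist g ^ 2 - 1).
Definition beta (g : nat) : R := acos (/ dist g).

(** P_i: endpoint of geodesic of side i beyond V_i;
    Q_{i+1}: endpoint of geodesic of side i beyond V_{i+1}. *)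
Definition Pend (g : nat) (i : Z) : C := cis (phi g i - beta g).
Definition Qend (g : nat) (i : Z) : C := cis (phi g (i - 1) + beta g).

(** T_i : the disk automorphism z |-> (a z + conj c)/(c z + conj a),
    |a|^2 - |c|^2 = 1, whose isometric circle |c z + conj a| = 1 is the
    geodesic P_i Q_{i+1} (center dist e^{i phi_i}, radius rad) and whose
    inverse has isometric circle the geodesic Q_{sigma(i)+1} P_{sigma(i)}
    (center dist e^{i phi_{sigma i}}); i.e. -conj a / c = dist e^{i phi_i},
    a / c = dist e^{i phi_{sigma i}}, |c| = 1/rad. *)
Definition Tcoef_a (g : nat) (i : Z) : C :=
  Cmult (RtoC (dist g / rad g))
        (cis ((PI - phi g i + phi g (sgm g i)) / 2)).
Definition Tcoef_c (g : nat) (i : Z) : C :=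
  Cmult (RtoC (/ rad g))
        (cis ((PI - phi g i - phi g (sgm g i)) / 2)).
Definition Tmap (g : nat) (i : Z) (z : C) : C :=
  Cdiv (Cplus (Cmult (Tcoef_a g i) z) (Cconj (Tcoef_c g i)))
       (Cplus (Cmult (Tcoef_c g i) z) (Cconj (Tcoef_a g i))).

(** Counterclockwise arc length ell(A,B) in [0, 2 pi) from A to B on the
    unit circle: the t with B = A e^{i t}. *)
Definition ell (A B : C) : R :=
  let w := Cmult (Cconj A) B in
  if Rle_dec 0 (Im w) then acos (Re w) else 2 * PI - acos (Re w).

Definition in_carc (A B x : C) : Prop := Cmod x = 1 /\ ell A x <= ell A B.
Definition in_oarc (A B x : C) : Prop :=
  Cmod x = 1 /\ 0 < ell A x /\ ell A x < ell A B.

(* Main.v *)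
Require Import Defs.
From Stdlib Require Import Reals ZArith Lra Psatz.
From Coquelicot Require Import Coquelicot.
Open Scope R_scope.

Lemma cis_add x y : cis (x + y) = Cmult (cis x) (cis y).
Proof. unfold cis, Cmult; simpl. rewrite cos_plus, sin_plus. f_equal; ring. Qed.

Lemma cos2atan m : cos (2 * atan m) = (1 - m^2) / (1 + m^2).
Proof.
  rewrite cos_2a, cos_atan, sin_atan.
  assert (Hs := sqrt_sqrt (1 + m²) ltac:(unfold Rsqr; nra)).
  assert (Hp : 0 < sqrt (1 + m²)) by (apply sqrt_lt_R0; unfold Rsqr; nra).
  replace (1 + m^2) with (sqrt (1 + m²) * sqrt (1 + m²)) by (rewrite Hs; unfold Rsqr; ring).
  field. lra.
Qed.

Lemma sin2atan m : sin (2 * atan m) = 2 * m / (1 + m^2).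
Proof.
  rewrite sin_2a, cos_atan, sin_atan.
  assert (Hs := sqrt_sqrt (1 + m²) ltac:(unfold Rsqr; nra)).
  assert (Hp : 0 < sqrt (1 + m²)) by (apply sqrt_lt_R0; unfold Rsqr; nra).
  replace (1 + m^2) with (sqrt (1 + m²) * sqrt (1 + m²)) by (rewrite Hs; unfold Rsqr; ring).
  field. lra.
Qed.

Definition kk d := (d+1)/(d-1).

Lemma mob (d C s: R) (hd: 1 < d) :
  Cplus (Cmult (RtoC (d*C)) (cis (PI + 2 * atan s))) (RtoC C) =
  Cmult (cis (2 * atan (kk d * s) - PI))
    (Cplus (Cmult (RtoC C) (cis (PI + 2 * atan s))) (RtoC (d*C))).
Proof.
  unfold cis, Cmult, Cplus, RtoC; simpl.
  rewrite !cos_plus, !sin_plus, !cos_minus, !sin_minus, cos_PI, sin_PI, !cos2atan, !sin2atan.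
  unfold kk.
  assert (0 < 1 + s^2) by nra.
  assert (0 < 1 + ((d+1)/(d-1)*s)^2) by nra.
  assert (d - 1 <> 0) by lra.
  f_equal; field; repeat split; try lra;
   (assert (0 < (d - 1) ^ 2) by (apply pow_lt; lra) || fail);
   nra.
Qed.

Lemma cis_conj_sc r x : Cconj (Cmult (RtoC r) (cis x)) = Cmult (RtoC r) (cis (-x)).
Proof. unfold cis, Cconj, Cmult, RtoC; simpl. rewrite cos_neg, sin_neg. f_equal; ring. Qed.

Lemma Cdiv_eq (x y X : C) : y <> 0%C -> x = Cmult X y -> Cdiv x y = X.
Proof. intros Hy ->. field. exact Hy. Qed.

Lemma cis_neq0 x : cis x <> 0%C.
Proof.
  intro H. unfold cis in H. injection H as H1 H2.
  pose proof (sin2_cos2 x). unfold Rsqr in *. rewrite H1, H2 in *. lra.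
Qed.

Lemma Cmult_neq0 (x y : C) : x <> 0%C -> y <> 0%C -> Cmult x y <> 0%C.
Proof.
  intros Hx Hy H. apply Hy.
  replace y with (Cmult (Cinv x) (Cmult x y)) by (field; exact Hx).
  rewrite H. ring.
Qed.

Lemma Tgen (d C p q s : R) (hd : 1 < d) (hC : 0 < C) :
  Cdiv (Cplus (Cmult (Cmult (RtoC (d*C)) (cis ((PI - p + q)/2))) (cis (p + 2*atan s)))
              (Cconj (Cmult (RtoC C) (cis ((PI - p - q)/2)))))
       (Cplus (Cmult (Cmult (RtoC C) (cis ((PI - p - q)/2))) (cis (p + 2*atan s)))
              (Cconj (Cmult (RtoC (d*C)) (cis ((PI - p + q)/2)))))
  = cis (q - PI + 2*atan (kk d * s)).
Proof.
  rewrite !cis_conj_sc.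
  set (u := 2 * atan s). set (v := 2 * atan (kk d * s)).
  set (W1 := Cplus (Cmult (RtoC (d*C)) (cis (PI + u))) (RtoC C)).
  set (W2 := Cplus (Cmult (RtoC C) (cis (PI + u))) (RtoC (d*C))).
  assert (HW : W1 = Cmult (cis (v - PI)) W2) by (apply mob; lra).
  assert (Hn : Cplus (Cmult (Cmult (RtoC (d*C)) (cis ((PI - p + q)/2))) (cis (p + u)))
              (Cmult (RtoC C) (cis (- ((PI - p - q)/2)))) = Cmult (cis ((p+q)/2 - PI/2)) W1).
  { unfold W1. rewrite <- Cmult_assoc, <- cis_add.
    replace ((PI - p + q) / 2 + (p + u)) with (((p+q)/2 - PI/2) + (PI + u)) by field.
    replace (- ((PI - p - q) / 2)) with ((p+q)/2 - PI/2) by field.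
    rewrite cis_add. ring. }
  assert (Hd : Cplus (Cmult (Cmult (RtoC C) (cis ((PI - p - q)/2))) (cis (p + u)))
              (Cmult (RtoC (d*C)) (cis (- ((PI - p + q)/2)))) = Cmult (cis ((p-q)/2 - PI/2)) W2).
  { unfold W2. rewrite <- Cmult_assoc, <- cis_add.
    replace ((PI - p - q) / 2 + (p + u)) with (((p-q)/2 - PI/2) + (PI + u)) by field.
    replace (- ((PI - p + q) / 2)) with ((p-q)/2 - PI/2) by field.
    rewrite cis_add. ring. }
  rewrite Hn, Hd. apply Cdiv_eq.
  - apply Cmult_neq0; [apply cis_neq0|].
    intro H. unfold W2, cis, Cmult, Cplus, RtoC in H; simpl in H.
    injection H as H1 H2. rewrite cos_plus, sin_plus, cos_PI, sin_PI in H1.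
    pose proof (COS_bound u). nra.
  - rewrite HW. rewrite !Cmult_assoc. f_equal.
    rewrite <- !cis_add. f_equal. field.
Qed.


Lemma fact8 : INR (Factorial.fact 8) = 40320.
Proof. rewrite !fact_simpl, !mult_INR. simpl. ring. Qed.
Lemma fact9 : INR (Factorial.fact 9) = 362880.
Proof. rewrite !fact_simpl, !mult_INR. simpl. ring. Qed.

Lemma cos_lb_eq x : cos_lb x = 1 - x^2/2 + x^4/24 - x^6/720.
Proof. unfold cos_lb, cos_approx, cos_term. simpl. field. Qed.
Lemma cos_ub_eq x : cos_ub x = 1 - x^2/2 + x^4/24 - x^6/720 + x^8/40320.
Proof. unfold cos_ub, cos_approx, cos_term. cbn [sum_f_R0].
  change (2*4)%nat with 8%nat. rewrite fact8.
  simpl Nat.mul. simpl pow. simpl (INR _). field. Qed.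
Lemma sin_lb_eq x : sin_lb x = x - x^3/6 + x^5/120 - x^7/5040.
Proof. unfold sin_lb, sin_approx, sin_term. simpl. field. Qed.

Lemma PI_lt_32 : PI < 16/5.
Proof.
  destruct (Rlt_or_le PI (16/5)) as [h|h]; [exact h|exfalso].
  assert (H := COS (8/5) ltac:(lra) ltac:(lra)).
  rewrite cos_ub_eq in H.
  assert (0 <= cos (8/5)).
  { apply cos_ge_0; lra. }
  lra.
Qed.

Lemma sin_ge x : 0 <= x -> x <= 1 -> x - x^3/6 <= sin x.
Proof. intros h0 h1. destruct (SIN x h0 ltac:(pose proof PI_RGT_0; pose proof PI2_3_2; lra)) as [H _].
  rewrite sin_lb_eq in H. assert (0 <= x^5/120 - x^7/5040).
  { assert (0 <= x^5) by (apply pow_le; lra). assert (x^7 <= x^5) by (replace (x^7) with (x^5 * x^2) by ring; assert (x^2 <= 1) by nra; nra).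
    lra. }
  lra. Qed.

Lemma cos_ge x : 0 <= x -> x <= 1 -> 1 - x^2/2 <= cos x.
Proof. intros h0 h1. destruct (COS x ltac:(pose proof PI2_3_2; lra) ltac:(pose proof PI2_3_2; lra)) as [H _].
  rewrite cos_lb_eq in H. assert (0 <= x^4/24 - x^6/720).
  { assert (0 <= x^4) by (apply pow_le; lra). assert (x^6 <= x^4) by (replace (x^6) with (x^4 * x^2) by ring; assert (x^2 <= 1) by nra; nra).
    lra. }
  lra. Qed.

Lemma tan_ge x : 0 <= x -> x <= 1 -> x - x^3/6 <= tan x.
Proof. intros h0 h1. unfold tan.
  pose proof (sin_ge x h0 h1). pose proof (cos_ge x h0 h1). pose proof (COS_bound x).
  assert (0 < cos x) by nra.
  assert (0 <= sin x) by (apply sin_ge_0; pose proof PI2_3_2; lra).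
  apply Rle_trans with (sin x); [lra|].
  apply Rmult_le_reg_r with (cos x); [lra|].
  unfold Rdiv. rewrite Rmult_assoc, Rinv_l by lra. nra. Qed.

Lemma tan_le x : 0 <= x -> x <= 1 -> tan x * (1 - x^2/2) <= x.
Proof. intros h0 h1. unfold tan.
  pose proof (cos_ge x h0 h1). assert (Hs : sin x <= x) by (destruct h0 as [h0|h0]; [left; apply sin_lt_x; lra| subst; rewrite sin_0; lra]).
  assert (0 < cos x) by nra.
  assert (0 <= sin x) by (apply sin_ge_0; pose proof PI2_3_2; lra).
  unfold Rdiv. apply Rle_trans with (sin x * / cos x * cos x).
  - apply Rmult_le_compat_l; [|lra]. apply Rmult_le_pos; [lra|]. left; apply Rinv_0_lt_compat; lra.
  - field_simplify; lra.
Qed.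

Lemma beta_bounds a b : 0 < a -> a <= 27/50 -> 0 <= b <= PI -> cos b = sqrt (cos a) ->
  7/10*a <= b <= 18/25*a.
Proof.
  intros h0 h1 hb hc. pose proof PI2_3_2.
  assert (hca : 0 < cos a) by (apply cos_gt_0; lra).
  assert (hsq : cos b * cos b = cos a) by (rewrite hc; apply sqrt_sqrt; lra).
  split.
  - destruct (Rle_or_lt (7/10*a) b) as [h|h]; [exact h|exfalso].
    assert (H1 : cos (7/10*a) < cos b) by (apply cos_decreasing_1; lra).
    assert (H2 : 0 < cos (7/10*a)) by (apply cos_gt_0; lra).
    assert (H3 : cos (2*(7/10*a)) = 2 * cos (7/10*a) * cos (7/10*a) - 1).
    { rewrite cos_2a_cos. ring. }
    replace (2*(7/10*a)) with (7/5*a) in H3 by lra.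
    destruct (COS a ltac:(lra) ltac:(lra)) as [_ Ha].
    destruct (COS (7/5*a) ltac:(lra) ltac:(lra)) as [Hb _].
    rewrite cos_ub_eq in Ha. rewrite cos_lb_eq in Hb.
    assert (cos (7/10*a) * cos (7/10*a) < cos a) by nra.
    set (y := a^2) in *.
    assert (0 < y) by (unfold y; nra). assert (y <= 3/10) by (unfold y; nra).
    replace (a^4) with (y^2) in * by (unfold y; field).
    replace (a^6) with (y^3) in * by (unfold y; field).
    replace (a^8) with (y^4) in * by (unfold y; field).
    replace ((7/5*a)^2) with (49/25*y) in * by (unfold y; field).
    replace ((7/5*a)^4) with ((49/25)^2*y^2) in * by (unfold y; field).
    replace ((7/5*a)^6) with ((49/25)^3*y^3) in * by (unfold y; field).
    nra.
  - destruct (Rle_or_lt b (18/25*a)) as [h|h]; [exact h|exfalso].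
    assert (H1 : cos b < cos (18/25*a)) by (apply cos_decreasing_1; lra).
    assert (H2 : 0 <= cos b) by (rewrite hc; apply sqrt_pos).
    assert (H3 : cos (2*(18/25*a)) = 2 * cos (18/25*a) * cos (18/25*a) - 1).
    { rewrite cos_2a_cos. ring. }
    replace (2*(18/25*a)) with (36/25*a) in H3 by lra.
    destruct (COS a ltac:(lra) ltac:(lra)) as [Ha _].
    destruct (COS (36/25*a) ltac:(lra) ltac:(lra)) as [_ Hb].
    rewrite cos_lb_eq in Ha. rewrite cos_ub_eq in Hb.
    assert (cos a < cos (18/25*a) * cos (18/25*a)) by nra.
    set (y := a^2) in *.
    assert (0 < y) by (unfold y; nra). assert (y <= 3/10) by (unfold y; nra).
    replace (a^4) with (y^2) in * by (unfold y; field).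
    replace (a^6) with (y^3) in * by (unfold y; field).
    replace ((36/25*a)^2) with ((36/25)^2*y) in * by (unfold y; field).
    replace ((36/25*a)^4) with ((36/25)^4*y^2) in * by (unfold y; field).
    replace ((36/25*a)^6) with ((36/25)^6*y^3) in * by (unfold y; field).
    replace ((36/25*a)^8) with ((36/25)^8*y^4) in * by (unfold y; field).
    nra.
Qed.

Lemma tan_up x c : 0 <= x -> x <= 1 -> x <= c -> 0 < 1 - c^2/2 -> tan x <= x / (1 - c^2/2).
Proof. intros h0 h1 hc hp. pose proof (tan_le x h0 h1).
  assert (0 <= tan x) by (pose proof (tan_ge x h0 h1); nra).
  apply Rmult_le_reg_r with (1 - c^2/2); [lra|].
  unfold Rdiv. rewrite Rmult_assoc, Rinv_l by lra. rewrite Rmult_1_r.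
  assert (x^2 <= c^2) by nra. assert (tan x * x^2 <= tan x * c^2) by nra. nra. Qed.

Lemma ineqA a b : 0 < a -> a <= 27/50 -> 7/10*a <= b <= 18/25*a ->
  tan (b/2) ^ 2 < tan (a/4) * tan (a - b/2).
Proof.
  intros h0 h1 hb.
  assert (Ht : tan (b/2) <= b/2 / (1 - (1/5)^2/2)) by (apply tan_up; lra).
  assert (Ht0 : 0 <= tan (b/2)) by (pose proof (tan_ge (b/2) ltac:(lra) ltac:(lra)); nra).
  assert (Ht1 : tan (b/2) <= 37/100*a).
  { apply Rle_trans with (1 := Ht). apply Rmult_le_reg_r with (1 - (1/5)^2/2); [lra|].
    unfold Rdiv. rewrite Rmult_assoc, Rinv_l by lra. lra. }
  assert (H1 : 249/1000*a <= tan (a/4)).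
  { pose proof (tan_ge (a/4) ltac:(lra) ltac:(lra)). nra. }
  assert (H2 : 62/100*a <= tan (a - b/2)).
  { pose proof (tan_ge (a - b/2) ltac:(lra) ltac:(lra)).
    assert ((a - b/2)^2 <= 13/100) by nra. nra. }
  nra.
Qed.

Lemma ineqB a b : 0 < a -> a <= 27/50 -> 7/10*a <= b <= 18/25*a ->
  tan ((a-b)/2) * tan (a - b/2) < tan (b/2) ^ 2.
Proof.
  intros h0 h1 hb.
  assert (Ht : 347/1000*a <= tan (b/2)).
  { pose proof (tan_ge (b/2) ltac:(lra) ltac:(lra)). assert ((b/2)^2 <= 1/25) by nra. nra. }
  assert (H1 : tan ((a-b)/2) <= (a-b)/2 / (1 - (1/10)^2/2)) by (apply tan_up; lra).
  assert (H1' : tan ((a-b)/2) <= 152/1000*a).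
  { apply Rle_trans with (1 := H1). apply Rmult_le_reg_r with (1 - (1/10)^2/2); [lra|].
    unfold Rdiv. rewrite Rmult_assoc, Rinv_l by lra. lra. }
  assert (H10 : 0 <= tan ((a-b)/2)) by (pose proof (tan_ge ((a-b)/2) ltac:(lra) ltac:(lra)); nra).
  assert (H2 : tan (a - b/2) <= (a - b/2) / (1 - (36/100)^2/2)) by (apply tan_up; lra).
  assert (H2' : tan (a - b/2) <= 7/10*a).
  { apply Rle_trans with (1 := H2). apply Rmult_le_reg_r with (1 - (36/100)^2/2); [lra|].
    unfold Rdiv. rewrite Rmult_assoc, Rinv_l by lra. lra. }
  assert (H20 : 0 <= tan (a - b/2)) by (pose proof (tan_ge (a - b/2) ltac:(lra) ltac:(lra)); nra).
  nra.
Qed.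


Lemma pyth x : cos x ^ 2 + sin x ^ 2 = 1.
Proof. pose proof (sin2_cos2 x). unfold Rsqr in H. lra. Qed.

Lemma Cmod_cis x : Cmod (cis x) = 1.
Proof. unfold Cmod, cis; simpl fst; simpl snd. rewrite pyth. apply sqrt_1. Qed.

Lemma conj_cis_mult a b : Cmult (Cconj (cis a)) (cis b) = cis (b - a).
Proof. unfold cis, Cconj, Cmult; simpl. rewrite cos_minus, sin_minus. f_equal; ring. Qed.

Lemma cis_2PI x : cis (x + 2*PI) = cis x.
Proof. unfold cis. rewrite cos_plus, sin_plus, cos_2PI, sin_2PI. f_equal; ring. Qed.

Lemma cis_m2PI x : cis (x - 2*PI) = cis x.
Proof. rewrite <- (cis_2PI (x - 2*PI)). f_equal. ring. Qed.

Lemma ell_cis a th : 0 <= th < 2*PI -> ell (cis a) (cis (a + th)) = th.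
Proof.
  intros [h0 h1]. unfold ell. rewrite conj_cis_mult.
  replace (a + th - a) with th by ring. unfold cis, Re, Im; simpl fst; simpl snd.
  destruct (Rle_dec 0 (sin th)) as [Hs|Hs].
  - destruct (Rle_or_lt th PI) as [hp|hp].
    + apply acos_cos; lra.
    + exfalso. assert (sin th < 0) by (apply sin_lt_0; lra). lra.
  - destruct (Rle_or_lt th PI) as [hp|hp].
    + exfalso. assert (0 <= sin th) by (apply sin_ge_0; lra). lra.
    + replace (cos th) with (cos (2*PI - th)).
      * rewrite acos_cos by lra. ring.
      * rewrite cos_minus, cos_2PI, sin_2PI. ring.
Qed.

Lemma ell_decomp a x : Cmod x = 1 ->
  x = cis (a + ell (cis a) x) /\ 0 <= ell (cis a) x < 2*PI.
Proof.
  intros Hx. destruct x as [x1 x2].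
  unfold Cmod in Hx; simpl fst in Hx; simpl snd in Hx.
  assert (H1 : x1^2 + x2^2 = 1).
  { assert (0 <= x1^2 + x2^2) by nra.
    rewrite <- (sqrt_sqrt (x1^2+x2^2)) by lra. rewrite Hx. ring. }
  unfold ell. unfold cis at 2, Cconj, Cmult, Re, Im; simpl fst; simpl snd.
  set (w1 := cos a * x1 - - sin a * x2).
  set (w2 := cos a * x2 + - sin a * x1).
  assert (Hw : w1^2 + w2^2 = 1).
  { transitivity ((cos a^2 + sin a^2) * (x1^2 + x2^2)); [unfold w1, w2; ring|].
    rewrite pyth, H1. ring. }
  assert (Hx1 : x1 = cos a * w1 - sin a * w2).
  { transitivity ((cos a^2 + sin a^2) * x1); [rewrite pyth; ring| unfold w1, w2; ring]. }
  assert (Hx2 : x2 = sin a * w1 + cos a * w2).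
  { transitivity ((cos a^2 + sin a^2) * x2); [rewrite pyth; ring| unfold w1, w2; ring]. }
  assert (Hb : -1 <= w1 <= 1) by nra.
  pose proof (acos_bound w1) as Hab.
  assert (Hsq : sqrt (1 - w1²) = Rabs w2).
  { replace (1 - w1²) with (w2²) by (unfold Rsqr; nra). apply sqrt_Rsqr_abs. }
  destruct (Rle_dec 0 w2) as [Hs|Hs].
  - split; [|pose proof PI_RGT_0; lra].
    unfold cis. rewrite cos_plus, sin_plus, cos_acos, sin_acos by lra.
    rewrite Hsq, Rabs_pos_eq by lra. rewrite Hx1, Hx2 at 1. reflexivity.
  - assert (Hne : 0 < acos w1).
    { destruct (proj1 Hab) as [h|h]; [exact h|].
      exfalso. assert (w1 = 1) by (rewrite <- (cos_acos w1) by lra; rewrite <- h; apply cos_0).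
      nra. }
    split; [|lra].
    unfold cis. rewrite cos_plus, sin_plus, cos_minus, sin_minus, cos_2PI, sin_2PI,
      cos_acos, sin_acos by lra.
    rewrite Hsq, Rabs_left by lra. rewrite Hx1, Hx2 at 1. f_equal; ring.
Qed.


Lemma N_ge g : (2 <= g)%nat -> 12 <= Nsides g.
Proof.
  intros hg. unfold Nsides. rewrite minus_INR by lia. rewrite mult_INR.
  apply le_INR in hg. simpl in *. lra.
Qed.

Definition alp g := 2 * PI / Nsides g.

Lemma phi_add g i k : 0 < Nsides g -> phi g (i + k) = phi g i + IZR k * alp g.
Proof. intros hN. unfold phi, alp. rewrite plus_IZR. field. lra. Qed.
Lemma phi_sub g i k : 0 < Nsides g -> phi g (i - k) = phi g i - IZR k * alp g.
Proof. intros hN. unfold phi, alp. rewrite minus_IZR. field. lra. Qed.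

Lemma alp_bounds g : (2 <= g)%nat -> 0 < alp g <= 27/50.
Proof.
  intros hg. pose proof (N_ge g hg). pose proof PI_lt_32. pose proof PI_RGT_0.
  unfold alp. split.
  - apply Rdiv_lt_0_compat; lra.
  - apply Rmult_le_reg_r with (Nsides g); [lra|]. unfold Rdiv.
    rewrite Rmult_assoc, Rinv_l by lra. nra.
Qed.

Lemma cosa_bounds g : (2 <= g)%nat -> 0 < cos (alp g) < 1.
Proof.
  intros hg. pose proof (alp_bounds g hg). pose proof PI2_3_2. split.
  - apply cos_gt_0; lra.
  - rewrite <- cos_0. apply cos_decreasing_1; lra.
Qed.

Lemma cosb g : (2 <= g)%nat -> cos (beta g) = sqrt (cos (alp g)).
Proof.
  intros hg. pose proof (cosa_bounds g hg).
  unfold beta, Defs.dist. fold (alp g). rewrite Rinv_inv.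
  apply cos_acos. pose proof (sqrt_lt_R0 (cos (alp g)) ltac:(lra)).
  assert (sqrt (cos (alp g)) < 1) by (rewrite <- sqrt_1; apply sqrt_lt_1; lra). lra.
Qed.

Lemma cosb_bounds g : (2 <= g)%nat -> 0 < cos (beta g) < 1.
Proof.
  intros hg. rewrite cosb by exact hg. pose proof (cosa_bounds g hg).
  split. apply sqrt_lt_R0; lra. rewrite <- sqrt_1; apply sqrt_lt_1; lra.
Qed.

Lemma beta_b g : (2 <= g)%nat -> 7/10 * alp g <= beta g <= 18/25 * alp g.
Proof.
  intros hg. pose proof (alp_bounds g hg). apply beta_bounds; try lra.
  - unfold beta. apply acos_bound.
  - apply cosb; exact hg.
Qed.

Lemma dist_eq g : (2 <= g)%nat -> Defs.dist g = / cos (beta g).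
Proof. intros hg. rewrite cosb by exact hg. reflexivity. Qed.

Lemma dist_gt1 g : (2 <= g)%nat -> 1 < Defs.dist g.
Proof.
  intros hg. rewrite dist_eq by exact hg. pose proof (cosb_bounds g hg).
  rewrite <- Rinv_1. apply Rinv_lt_contravar; lra.
Qed.

Lemma rad_pos g : (2 <= g)%nat -> 0 < rad g.
Proof. intros hg. pose proof (dist_gt1 g hg). unfold rad. apply sqrt_lt_R0. nra. Qed.

Definition tb g := tan (beta g / 2).

Lemma tb_pos g : (2 <= g)%nat -> 0 < tb g.
Proof. intros hg. pose proof (beta_b g hg). pose proof (alp_bounds g hg). pose proof PI2_3_2.
  unfold tb. apply tan_gt_0; lra. Qed.

Lemma atan_tb g : (2 <= g)%nat -> atan (tb g) = beta g / 2.
Proof. intros hg. pose proof (beta_b g hg). pose proof (alp_bounds g hg). pose proof PI2_3_2.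
  unfold tb. apply atan_tan; lra. Qed.

Lemma kk_eq g : (2 <= g)%nat -> kk (Defs.dist g) = / (tb g ^ 2).
Proof.
  intros hg. pose proof (tb_pos g hg). pose proof (cosb_bounds g hg).
  rewrite dist_eq by exact hg.
  assert (Hc : cos (beta g) = (1 - tb g ^2) / (1 + tb g^2)).
  { rewrite <- cos2atan, atan_tb by exact hg. f_equal; field. }
  unfold kk.
  replace ((/ cos (beta g) + 1) / (/ cos (beta g) - 1)) with ((1 + cos (beta g)) / (1 - cos (beta g)))
    by (field; split; lra).
  rewrite Hc. assert (0 < 1 + tb g^2) by nra. assert (0 < tb g ^2) by nra.
  field. repeat split; nra.
Qed.

Lemma Tcis g i s : (2 <= g)%nat ->
  Tmap g i (cis (phi g i + 2 * atan s)) = cis (phi g (sgm g i) - PI + 2 * atan (s / tb g ^ 2)).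
Proof.
  intros hg. unfold Tmap, Tcoef_a, Tcoef_c. unfold Rdiv at 1.
  rewrite Tgen by (first [apply dist_gt1 | apply Rinv_0_lt_compat, rad_pos]; exact hg).
  rewrite kk_eq by exact hg. f_equal. f_equal. f_equal. f_equal. unfold Rdiv. ring.
Qed.


Lemma tan_mono x y : - PI / 2 < x -> x <= y -> y < PI / 2 -> tan x <= tan y.
Proof. intros h1 [h|h] h3; [left; apply tan_increasing; lra | subst; lra]. Qed.

Lemma atan_mono x y : x <= y -> atan x <= atan y.
Proof. intros [h|h]; [left; apply atan_increasing; lra | subst; lra]. Qed.

Theorem corollary8p2 (g : nat) (hg : (2 <= g)%nat) (j : Z) :
  (exists a b : C,
      in_oarc (Pend g j) (Qend g j) a /\ in_oarc (Pend g j) (Qend g j) b /\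
      ell (Pend g j) a > ell (Pend g j) (Qend g j) / 2 /\
      ell b (Qend g j) > ell (Pend g j) (Qend g j) / 2 /\
      Tmap g j a = Pend g (rh g j + 1) /\
      Tmap g (j - 1) b = Qend g (tht g (j - 1)))
  /\
  (forall x : C, in_carc (Pend g j) (Qend g j) x ->
      ell (Pend g j) x <= ell (Pend g j) (Qend g j) / 2 ->
      in_carc (Qend g (sgm g j + 1)) (Pend g (sgm g j + 2)) (Tmap g j x))
  /\
  (forall x : C, in_carc (Pend g j) (Qend g j) x ->
      ell x (Qend g j) <= ell (Pend g j) (Qend g j) / 2 ->
      in_carc (Qend g (tht g (j - 1))) (Pend g (tht g (j - 1) + 1)) (Tmap g (j - 1) x)).
Proof.
  pose proof (alp_bounds g hg) as Ha. pose proof (beta_b g hg) as Hb.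
  pose proof (tb_pos g hg) as Ht. pose proof (atan_tb g hg) as Hat.
  pose proof (N_ge g hg) as HN. assert (hN : 0 < Nsides g) by lra.
  pose proof PI_RGT_0. pose proof PI2_3_2. pose proof PI_lt_32.
  set (al := alp g) in *. set (be := beta g) in *. set (t := tb g) in *.
  set (ga := al - be / 2).
  assert (Hga : 0 < tan ga) by (apply tan_gt_0; unfold ga; lra).
  assert (Hatga : atan (/ tan ga) = PI/2 - ga).
  { rewrite atan_inv by lra. rewrite atan_tan; [ring| unfold ga; lra]. }
  assert (HA := ineqA al be ltac:(lra) ltac:(lra) ltac:(lra)).
  assert (HB := ineqB al be ltac:(lra) ltac:(lra) ltac:(lra)).
  fold ga in HA, HB. replace (tan (be/2)) with t in HA, HB by reflexivity.
  assert (HP : Pend g j = cis (phi g j - be)) by reflexivity.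
  assert (HQ : Qend g j = cis ((phi g j - be) + (2*be - al))).
  { unfold Qend. rewrite phi_sub by lra. f_equal. simpl IZR. unfold al, be; ring. }
  assert (HL : ell (Pend g j) (Qend g j) = 2*be - al).
  { rewrite HP, HQ. apply ell_cis. lra. }
  rewrite HL. split; [|split].
  -
    set (w := t^2 / tan ga).
    assert (Hw1 : tan ((al - be)/2) < w).
    { unfold w. apply Rmult_lt_reg_r with (tan ga); [lra|]. unfold Rdiv.
      rewrite Rmult_assoc, Rinv_l by lra. lra. }
    assert (Hw2 : w < tan (al/4)).
    { unfold w. apply Rmult_lt_reg_r with (tan ga); [lra|]. unfold Rdiv.
      rewrite Rmult_assoc, Rinv_l by lra. lra. }
    assert (Haw1 : (al - be)/2 < atan w).
    { rewrite <- (atan_tan ((al-be)/2)) by lra. apply atan_increasing; lra. }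
    assert (Haw2 : atan w < al/4).
    { rewrite <- (atan_tan (al/4)) by lra. apply atan_increasing; lra. }
    assert (Hwt : w / t^2 = / tan ga).
    { unfold w. field. split; lra. }
    exists (cis (phi g j + 2 * atan (- w))), (cis (phi g (j - 1) + 2 * atan w)).
    rewrite atan_opp.
    assert (Ea : cis (phi g j + 2 * - atan w) = cis ((phi g j - be) + (be - 2 * atan w)))
      by (f_equal; ring).
    assert (Eb : cis (phi g (j - 1) + 2 * atan w) = cis ((phi g j - be) + (be - al + 2 * atan w)))
      by (rewrite phi_sub by lra; f_equal; simpl IZR; unfold al, be; ring).
    assert (ela : ell (Pend g j) (cis (phi g j + 2 * - atan w)) = be - 2 * atan w)
      by (rewrite HP, Ea; apply ell_cis; lra).
    assert (elb : ell (Pend g j) (cis (phi g (j - 1) + 2 * atan w)) = be - al + 2 * atan w)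
      by (rewrite HP, Eb; apply ell_cis; lra).
    split; [|split; [|split; [|split; [|split]]]].
    + split; [apply Cmod_cis|]. rewrite ela. lra.
    + split; [apply Cmod_cis|]. rewrite elb. lra.
    + rewrite ela. lra.
    + rewrite Eb, HQ.
      replace (phi g j - be + (2 * be - al)) with ((phi g j - be + (be - al + 2 * atan w)) + (be - 2 * atan w)) by ring.
      rewrite ell_cis by lra. lra.
    + replace (phi g j + 2 * - atan w) with (phi g j + 2 * atan (- w)) by (rewrite atan_opp; ring).
      rewrite Tcis by exact hg. fold t.
      replace (- w / t^2) with (- (w / t^2)) by (field; lra).
      rewrite Hwt, atan_opp, Hatga.
      unfold Pend, rh. rewrite !phi_add by lra. fold be al. simpl IZR.
      match goal with |- cis ?A = cis ?B =>
        replace A with (B - 2*PI) by (unfold ga; lra); apply cis_m2PI end.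
    + rewrite Tcis by exact hg. fold t. rewrite Hwt, Hatga.
      unfold Qend, tht. rewrite !phi_sub by lra. fold be al. simpl IZR.
      f_equal. unfold ga. lra.
  -
    intros x [Hx Hle] Hh. rewrite HL in Hle.
    destruct (ell_decomp (phi g j - be) x Hx) as [Hxe Hr].
    rewrite HP in Hle, Hh.
    set (tau := ell (cis (phi g j - be)) x) in *.
    set (s := tan ((tau - be)/2)).
    assert (Has : atan s = (tau - be)/2) by (apply atan_tan; lra).
    assert (Ex : x = cis (phi g j + 2 * atan s)) by (rewrite Hxe, Has; f_equal; field).
    rewrite Ex, Tcis by exact hg. fold t.
    assert (Hs1 : - t <= s).
    { unfold s, t, tb. fold be. rewrite <- tan_neg. apply tan_mono; lra. }
    assert (Hs2 : s <= - tan (al/4)).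
    { unfold s. rewrite <- tan_neg. apply tan_mono; lra. }
    assert (Hv1 : - / t <= s / t^2).
    { replace (s / t^2) with (- / t + (s + t) / t^2) by (field; lra).
      assert (0 <= (s + t) / t^2) by (unfold Rdiv; apply Rmult_le_pos; [lra| left; apply Rinv_0_lt_compat; nra]).
      lra. }
    assert (Hv2 : s / t^2 <= - / tan ga).
    { apply Rmult_le_reg_r with (t^2 * tan ga); [apply Rmult_lt_0_compat; [nra|lra]|]. unfold Rdiv.
      replace (s * / t ^ 2 * (t ^ 2 * tan ga)) with (s * tan ga) by (field; lra).
      replace (- / tan ga * (t ^ 2 * tan ga)) with (- t^2) by (field; lra). nra. }
    apply atan_mono in Hv1. apply atan_mono in Hv2.
    rewrite atan_opp, atan_inv, Hat in Hv1 by lra. rewrite atan_opp, Hatga in Hv2.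
    set (V := 2 * atan (s / t^2)) in *.
    assert (EQ : Qend g (sgm g j + 1) = cis (phi g (sgm g j) + be)).
    { unfold Qend. rewrite phi_sub, phi_add by lra. f_equal. unfold al, be; ring. }
    assert (EP : Pend g (sgm g j + 2) = cis ((phi g (sgm g j) + be) + (2*al - 2*be))).
    { unfold Pend. rewrite phi_add by lra. f_equal. simpl IZR. unfold al, be; ring. }
    rewrite EQ, EP. split; [apply Cmod_cis|].
    replace (phi g (sgm g j) - PI + V) with ((phi g (sgm g j) + be) + (V + PI - be) - 2*PI) by ring.
    rewrite cis_m2PI, !ell_cis; unfold V in *; unfold ga in *; lra.
  -
    intros x [Hx Hle] Hh. rewrite HL in Hle.
    destruct (ell_decomp (phi g j - be) x Hx) as [Hxe Hr].
    rewrite HP in Hle. rewrite HQ in Hh.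
    set (tau := ell (cis (phi g j - be)) x) in *.
    rewrite Hxe in Hh.
    replace (phi g j - be + (2 * be - al)) with ((phi g j - be + tau) + (2*be - al - tau)) in Hh by ring.
    rewrite ell_cis in Hh by lra.
    set (s := tan ((tau - be + al)/2)).
    assert (Has : atan s = (tau - be + al)/2) by (apply atan_tan; lra).
    assert (Ex : x = cis (phi g (j - 1) + 2 * atan s)).
    { rewrite Hxe, Has, phi_sub by lra. f_equal. simpl IZR. unfold al, be; field. }
    rewrite Ex, Tcis by exact hg. fold t.
    assert (Hs1 : s <= t).
    { unfold s, t, tb. fold be. apply tan_mono; lra. }
    assert (Hs2 : tan (al/4) <= s).
    { unfold s. apply tan_mono; lra. }
    assert (Hv1 : s / t^2 <= / t).
    { replace (s / t^2) with (/ t - (t - s) / t^2) by (field; lra).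
      assert (0 <= (t - s) / t^2) by (unfold Rdiv; apply Rmult_le_pos; [lra| left; apply Rinv_0_lt_compat; nra]).
      lra. }
    assert (Hv2 : / tan ga <= s / t^2).
    { apply Rmult_le_reg_r with (t^2 * tan ga); [apply Rmult_lt_0_compat; [nra|lra]|]. unfold Rdiv.
      replace (s * / t ^ 2 * (t ^ 2 * tan ga)) with (s * tan ga) by (field; lra).
      replace (/ tan ga * (t ^ 2 * tan ga)) with (t^2) by (field; lra). nra. }
    apply atan_mono in Hv1. apply atan_mono in Hv2.
    rewrite atan_inv, Hat in Hv1 by lra. rewrite Hatga in Hv2.
    set (V := 2 * atan (s / t^2)) in *.
    assert (EQ : Qend g (tht g (j - 1)) = cis (phi g (sgm g (j - 1)) - 2*al + be)).
    { unfold Qend, tht. rewrite !phi_sub by lra. f_equal. simpl IZR. unfold al, be; ring. }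
    assert (EP : Pend g (tht g (j - 1) + 1) = cis ((phi g (sgm g (j - 1)) - 2*al + be) + (2*al - 2*be))).
    { unfold Pend, tht. rewrite phi_add, phi_sub by lra. f_equal. simpl IZR. unfold al, be; ring. }
    rewrite EQ, EP. split; [apply Cmod_cis|].
    replace (phi g (sgm g (j - 1)) - PI + V) with ((phi g (sgm g (j - 1)) - 2*al + be) + (V - PI + 2*al - be)) by ring.
    rewrite !ell_cis; unfold V in *; unfold ga in *; lra.
Qed.
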